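(* Let $m,n$ be natural numbers with $\min\{m,n\}\ge4$, let $\{|e_i\rangle\}_{i=0}^{m-1}$ and $\{|f_j\rangle\}_{j=0}^{n-1}$ be the canonical bases of $\mathbb{C}^m$ and $\mathbb{C}^n$, and let $a\in\mathbb{R}$. Define subspaces of $\mathbb{C}^m\otimes\mathbb{C}^n$: $$\mathcal{T}=\mathrm{span}\{|e_{i-2}\rangle\otimes|f_{j+1}\rangle+(a+1)|e_{i-1}\rangle\otimes|f_j\rangle+(a+1)|e_i\rangle\otimes|f_{j-1}\rangle+|e_{i+1}\rangle\otimes|f_{j-2}\rangle:\ 2\le i\le m-2,\ 2\le j\le n-2\},$$ $$\mathcal{S}=\mathrm{span}\{|e_{i-1}\rangle\otimes|f_{j+1}\rangle+a|e_i\rangle\otimes|f_j\rangle+|e_{i+1}\rangle\otimes|f_{j-1}\rangle:\ 1\le i\le m-2,\ 1\le j\le n-2\}.$$ Then: (1) $\mathcal{T}\subset\mathcal{S}$; (2) if $|a|\ge2$, then $\mathcal{S}$ does not contain any non-zero vector of Schmidt rank $\le2$, and $\dim\mathcal{S}=(m-2)(n-2)$; (3) if $a>4$, then $\mathcal{T}$ does not contain any non-zero vector of Schmidt rank $\le3$, and $\dim\mathcal{T}=(m-3)(n-3)$; (4) if $a>4$, then there is at least one vector of Schmidt rank $3$ in $\mathcal{S}\setminus\mathcal{T}$.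
   Context: The Schmidt rank of $|\psi\rangle=\sum_{i,j}c_{ij}|e_i\rangle\otimes|f_j\rangle\in\mathbb{C}^m\otimes\mathbb{C}^n$ is the minimal number of terms in a decomposition $|\psi\rangle=\sum_{l=1}^r|u_l\rangle\otimes|v_l\rangle$; equivalently, the rank of the matrix $[c_{ij}]$. (The paper presents $\mathcal{T}$ and $\mathcal{S}$ as direct sums over anti-diagonal index $d$ of the spans of generators with $i+j=d+1$, respectively $i+j=d$; these are the same subspaces.) *)

(* Defs.v *)
(* C^m (x) C^n is modelled as m x n matrices over R[i]
   (R a real field; for R : realType, R[i] is the complex numbers).
   Subspaces are mxalgebra row spaces of vectorised matrices (mxvec). *)
From HB Require Import structures.
From mathcomp Require Import all_boot all_order all_algebra.
From mathcomp Require Import complex.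
Set Implicit Arguments. Unset Strict Implicit. Unset Printing Implicit Defensive.
Import Order.TTheory GRing.Theory Num.Theory.
Local Open Scope ring_scope.

Section Defs.
Variable R : rcfType.
Local Notation C := R[i].

(* |e_i> (x) |f_j>, with natural-number indices (zero if out of range) *)
Definition ebasis (m n i j : nat) : 'M[C]_(m, n) :=
  \matrix_(p < m, q < n) ((p == i :> nat) && (q == j :> nat))%:R.

Definition Tgen (m n : nat) (a : R) (i j : nat) : 'M[C]_(m, n) :=
  ebasis m n (i - 2) (j + 1) + (a + 1)%:C%C *: ebasis m n (i - 1) j
  + (a + 1)%:C%C *: ebasis m n i (j - 1) + ebasis m n (i + 1) (j - 2).

Definition Sgen (m n : nat) (a : R) (i j : nat) : 'M[C]_(m, n) :=
  ebasis m n (i - 1) (j + 1) + a%:C%C *: ebasis m n i j + ebasis m n (i + 1) (j - 1).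

Definition Tspace (m n : nat) (a : R) : 'M[C]_(m * n) :=
  (\sum_(2 <= i < m - 1) \sum_(2 <= j < n - 1) <<mxvec (Tgen m n a i j)>>)%MS.

Definition Sspace (m n : nat) (a : R) : 'M[C]_(m * n) :=
  (\sum_(1 <= i < m - 1) \sum_(1 <= j < n - 1) <<mxvec (Sgen m n a i j)>>)%MS.

Definition in_space (m n : nat) (v : 'M[C]_(m, n)) (U : 'M[C]_(m * n)) : bool :=
  (mxvec v <= U)%MS.

Definition schmidt_rank (m n : nat) (v : 'M[C]_(m, n)) : nat := \rank v.

Definition dimsp (k : nat) (U : 'M[C]_k) : nat := \rank U.
End Defs.

(* Main.v *)
Require Import Defs.
From HB Require Import structures.
From mathcomp Require Import all_boot all_order all_algebra.
From mathcomp Require Import complex.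
From mathcomp Require Import reals.
From mathcomp Require Import polyrcf.
From mathcomp Require Import zify ring lra.
Import Order.TTheory GRing.Theory Num.Theory.
Local Open Scope ring_scope.

Section Gen.
Context {F : fieldType}.
Lemma sub_seqsum k p (r : seq nat) (B : nat -> 'M[F]_k) (A : 'M[F]_(p,k)) x :
  x \in r -> (A <= B x)%MS -> (A <= \sum_(i <- r) B i)%MS.
Proof.
elim: r => // y r IH; rewrite inE big_cons => /orP [/eqP-> | xr] sAB.
  by apply: submx_trans sAB (addsmxSl _ _).
by apply: submx_trans (IH xr sAB) (addsmxSr _ _).
Qed.

Lemma seqsum_sub k p (r : seq nat) (B : nat -> 'M[F]_k) (X : 'M[F]_(p,k)) :
  (forall x, x \in r -> (B x <= X)%MS) -> (\sum_(i <- r) B i <= X)%MS.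
Proof.
elim: r => [|y r IH] H; first by rewrite big_nil sub0mx.
rewrite big_cons addsmx_sub H ?mem_head //=.
by apply: IH; move=> x xr; apply: H; rewrite inE xr orbT.
Qed.

Lemma rank_seqsum k (r : seq nat) (B : nat -> 'M[F]_k) :
  (\rank (\sum_(i <- r) B i)%MS <= \sum_(i <- r) \rank (B i))%N.
Proof.
elim: r => [|y r IH]; first by rewrite !big_nil mxrank0.
rewrite !big_cons; apply: leq_trans (mxrank_adds_leqif _ _) _. by rewrite leq_add2l.
Qed.

Definition dsum {m n} (G : nat -> nat -> 'M[F]_(m,n)) a b c d : 'M[F]_(m*n) :=
  (\sum_(a <= i < b) \sum_(c <= j < d) <<mxvec (G i j)>>)%MS.

Lemma dsum_sup m n (G : nat -> nat -> 'M[F]_(m,n)) a b c d i j : (a <= i < b)%N -> (c <= j < d)%N ->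
  (mxvec (G i j) <= dsum G a b c d)%MS.
Proof.
move=> hi hj; apply: (@sub_seqsum _ _ _ _ _ i); first by rewrite mem_index_iota.
apply: (@sub_seqsum _ _ _ _ _ j); first by rewrite mem_index_iota.
by rewrite genmxE.
Qed.

Lemma dsum_sub m n (G : nat -> nat -> 'M[F]_(m,n)) a b c d p (X : 'M[F]_(p, m*n)) :
  (forall i j, (a <= i < b)%N -> (c <= j < d)%N -> (mxvec (G i j) <= X)%MS) ->
  (dsum G a b c d <= X)%MS.
Proof.
move=> H; apply: seqsum_sub => i; rewrite mem_index_iota => hi.
apply: seqsum_sub => j; rewrite mem_index_iota => hj.
by rewrite genmxE; apply: H.
Qed.

Lemma dsum_rank m n (G : nat -> nat -> 'M[F]_(m,n)) a b c d : (\rank (dsum G a b c d) <= (b - a) * (d - c))%N.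
Proof.
rewrite /dsum. apply: leq_trans; first exact: rank_seqsum.
rewrite -sum_nat_const_nat; apply: leq_sum => i _.
apply: leq_trans; first exact: rank_seqsum.
rewrite -[(d - c)%N]muln1 -sum_nat_const_nat; apply: leq_sum => j _.
by rewrite mxrank_gen rank_leq_row.
Qed.

Lemma rank_tri k m n (v : 'M[F]_(m,n)) d0 (f : 'I_k -> 'I_m) (g : 'I_k -> 'I_n) :
  (forall (i : 'I_m) (j : 'I_n), (i + j < d0)%N -> v i j = 0) ->
  (forall x, (f x + g x)%N = d0) ->
  (forall x y : 'I_k, (x < y)%N -> (f x < f y)%N) ->
  (forall x, v (f x) (g x) != 0) -> (k <= \rank v)%N.
Proof.
move=> v0 fg fmono vnz.
have r1 : (\rank (mxsub f g v) <= \rank v)%N.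
  rewrite mxsubrc rowsubE; apply: leq_trans (mxrankM_maxr _ _) _.
  rewrite -[v]mulmx1 -mulmx_colsub mulmx1; exact: mxrankM_maxl.
suff -> : k = \rank (mxsub f g v) by [].
apply/esym/mxrank_unit; rewrite unitmxE unitfE det_trig.
  by apply/prodf_neq0 => x _; rewrite mxE.
apply/forallP => x; apply/forallP => y; apply/implyP => xy.
rewrite mxE v0 //; have := fmono _ _ xy; have := fg y; lia.
Qed.

Definition dot {m n} (v P : 'M[F]_(m,n)) : F := \sum_i \sum_j v i j * P i j.

Lemma dotE m n (v P : 'M[F]_(m,n)) : (mxvec v *m (mxvec P)^T) 0 0 = dot v P.
Proof.
rewrite !mxE (reindex _ (curry_mxvec_bij _ _)) /= /dot pair_bigA /=.
by apply: eq_bigr => [[i j]] _ /=; rewrite !mxE !mxvecE.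
Qed.

Lemma dotD m n (u v P : 'M[F]_(m,n)) : dot (u + v) P = dot u P + dot v P.
Proof.
rewrite /dot -big_split; apply: eq_bigr => i _ /=; rewrite -big_split; apply: eq_bigr => j _ /=.
by rewrite mxE mulrDl.
Qed.

Lemma dotZ m n c (v P : 'M[F]_(m,n)) : dot (c *: v) P = c * dot v P.
Proof.
rewrite /dot mulr_sumr; apply: eq_bigr => i _ /=; rewrite mulr_sumr; apply: eq_bigr => j _ /=.
by rewrite mxE mulrA.
Qed.

Lemma dot_kill m n (G : nat -> nat -> 'M[F]_(m,n)) a b c d (P : 'M[F]_(m,n)) v :
  (forall i j, (a <= i < b)%N -> (c <= j < d)%N -> dot (G i j) P = 0) ->
  (mxvec v <= dsum G a b c d)%MS -> dot v P = 0.
Proof.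
move=> H sv.
have sK : (dsum G a b c d <= kermx (mxvec P)^T)%MS.
  apply: dsum_sub => i j hi hj; apply/sub_kermxP; apply/matrixP => x y.
  by rewrite !ord1 dotE H // mxE.
have /sub_kermxP := submx_trans sv sK.
by move/matrixP/(_ 0 0); rewrite dotE mxE.
Qed.

Lemma enum_sorted m (A : {pred 'I_m}) : sorted (fun i j : 'I_m => (i < j)%N) (enum A).
Proof.
rewrite -deprecated_filter_index_enum. apply: sorted_filter; first by move=> x y z; apply: ltn_trans.
have := iota_ltn_sorted 0 m; rewrite -val_enum_ord sorted_map. by rewrite /index_enum -enumT.
Qed.

Lemma low_rank (Wp : (nat -> F) -> Prop) (K m n : nat) (v : 'M[F]_(m,n)) :
  v != 0 ->
  (forall d w, Wp w -> dot v (\matrix_(i,j) (((i + j == d)%N)%:R * w (i : nat))) = 0) ->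
  (forall k (e : 'I_k -> nat) (c : 'I_k -> F), (0 < k)%N ->
     (forall x y : 'I_k, (x < y)%N -> (e x < e y)%N) -> (forall x, c x != 0) ->
     (forall w, Wp w -> \sum_(x < k) c x * w (e x) = 0) -> (K <= k)%N) ->
  (K <= \rank v)%N.
Proof.
move=> vnz Hw Hsp.
have [i0 [j0 v0]] : exists i j, v i j != 0.
  case: (pickP (fun p : 'I_m * 'I_n => v p.1 p.2 != 0)) => [[i j] /= H | H].
    by exists i, j.
  by case/eqP: vnz; apply/matrixP => i j; move: (H (i, j)) => /negbFE/eqP; rewrite mxE.
pose P d := [exists i : 'I_m, exists j : 'I_n, (i + j == d)%N && (v i j != 0)].
have exP : exists d, P d.
  by exists (i0 + j0)%N; apply/existsP; exists i0; apply/existsP; exists j0; rewrite eqxx.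
case: (ex_minnP exP) => d0 Pd0 mind0.
have vlow (i : 'I_m) (j : 'I_n) : (i + j < d0)%N -> v i j = 0.
  move=> lt; apply/eqP; apply: contraTT lt => nz; rewrite -leqNgt; apply: mind0.
  by apply/existsP; exists i; apply/existsP; exists j; rewrite eqxx.
pose c (i : 'I_m) := \sum_(j < n | (i + j == d0)%N) v i j.
have cuniq (i : 'I_m) (j : 'I_n) : (i + j = d0)%N -> c i = v i j.
  move=> e; rewrite /c (bigD1 j) /=; last by rewrite e.
  rewrite big1 ?addr0 // => j' /andP [/eqP e' ne]; case/eqP: ne; apply: val_inj => /=; lia.
pose A := [pred i : 'I_m | c i != 0].
have Aex (i : 'I_m) : i \in A -> exists j : 'I_n, (i + j == d0)%N && (v i j != 0).
  rewrite inE => ci.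
  case: (pickP (fun j : 'I_n => (i + j == d0)%N && (v i j != 0))) => [j Hj | H]; first by exists j.
  case/eqP: ci; rewrite /c big1 // => j hj; by have := H j; rewrite hj /= => /negbFE/eqP.
pose k := #|A|.
pose f (x : 'I_k) : 'I_m := enum_val x.
have fA x : f x \in A by apply: enum_valP.
have fmono (x y : 'I_k) : (x < y)%N -> (f x < f y)%N.
  move=> xy; rewrite /f !(enum_val_nth (f x)).
  have tr : transitive (fun i j : 'I_m => (i < j)%N) by move=> ? ? ?; apply: ltn_trans.
  by apply: (sorted_ltn_nth tr (f x) (enum_sorted _ A)) => //; rewrite inE -cardE ltn_ord.
have kpos : (0 < k)%N.
  move/existsP: Pd0 => [i /existsP [j /andP [/eqP e nz]]].
  by apply/card_gt0P; exists i; rewrite inE (cuniq i j e).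
have KK : (K <= k)%N.
  apply: (Hsp k (fun x => nat_of_ord (f x)) (fun x => c (f x))) => //.
  move=> w Ww; rewrite -[RHS](Hw d0 w Ww).
  rewrite -(big_enum_val (A := A) (fun i => c i * w (nat_of_ord i))) /=.
  rewrite big_mkcond /dot; apply: eq_bigr => i _ /=.
  have -> : (if i \in A then c i * w i else 0) = c i * w i.
    by case: ifP => //; rewrite inE => /negbFE/eqP ->; rewrite mul0r.
  rewrite /c big_mkcond mulr_suml; apply: eq_bigr => j _; rewrite mxE.
  by case: ifP => _; rewrite ?mul1r ?mul0r ?mulr0.
have [g Hg] := fin_all_exists (fun x => Aex (f x) (fA x)).
apply: leq_trans KK _.
apply: (@rank_tri _ _ _ v d0 f g) => //.
- by move=> x; have /andP [/eqP -> _] := Hg x.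
- by move=> x; have /andP [_ ->] := Hg x.
Qed.
End Gen.


Section R3.
Variable R : rcfType.

Lemma R3core (b0 b1 b2 s1 s2 s3 : R) (p q : nat) :
  (0 < p)%N -> (p < q)%N -> 0 < s1 -> s1 < s2 -> s2 < s3 ->
  (forall s, s \in [:: s1; s2; s3] -> b0 + b1 * s ^+ p + b2 * s ^+ q = 0) ->
  b2 = 0 /\ b1 = 0 /\ b0 = 0.
Proof.
move=> p0 pq h1 h12 h23 H.
pose phi : {poly R} := b0%:P + b1 *: 'X^p + b2 *: 'X^q.
have ev s : phi.[s] = b0 + b1 * s ^+ p + b2 * s ^+ q.
  by rewrite /phi !hornerE.
have dv s : phi^`().[s] = b1 * (s ^+ p.-1 *+ p) + b2 * (s ^+ q.-1 *+ q).
  by rewrite /phi !derivE add0r hornerD !hornerZ !hornerMn !hornerXn.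
have e12 : phi.[s1] = phi.[s2] by rewrite !ev !H ?inE ?eqxx ?orbT.
have e23 : phi.[s2] = phi.[s3] by rewrite !ev !H ?inE ?eqxx ?orbT.
have [t1 ht1 d1] := poly_rolle h12 e12.
have [t2 ht2 d2] := poly_rolle h23 e23.
move: ht1 ht2; rewrite !in_itv /= => /andP [lt1 ut1] /andP [lt2 ut2].
rewrite dv in d1; rewrite dv in d2.
have t1p : 0 < t1 by apply: lt_trans lt1.
have t12 : t1 < t2 by apply: lt_trans ut1 lt2.
have t2p : 0 < t2 by apply: lt_trans t12.
have key t : 0 < t -> b1 * (t ^+ p.-1 *+ p) + b2 * (t ^+ q.-1 *+ q) = 0 ->
    b1 *+ p + b2 *+ q * t ^+ (q - p) = 0.
  move=> tp; have tn : t ^+ p.-1 != 0 by rewrite expf_neq0 // gt_eqF.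
  have -> : (q.-1 = p.-1 + (q - p))%N by lia.
  rewrite exprD => E.
  have : (b1 *+ p + b2 *+ q * t ^+ (q - p)) * t ^+ p.-1 = 0.
    by rewrite -E; ring.
  by move/eqP; rewrite mulf_eq0 (negbTE tn) orbF => /eqP.
have k1 := key _ t1p d1; have k2 := key _ t2p d2.
have hb2 : b2 = 0.
  have : b2 *+ q * (t1 ^+ (q - p) - t2 ^+ (q - p)) = 0.
    transitivity ((b1 *+ p + b2 *+ q * t1 ^+ (q - p)) - (b1 *+ p + b2 *+ q * t2 ^+ (q - p))).
      by ring.
    by rewrite k1 k2 subrr.
  move/eqP; rewrite mulf_eq0 subr_eq0 => /orP [|].
    by rewrite mulrn_eq0 /= => /orP[/eqP|/eqP]; [lia|].
  have := ltrXn2r (q - p) (ltW t1p) t12; rewrite subn_eq0 leqNgt pq /= => lt.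
  by rewrite (lt_eqF lt).
have hb1 : b1 = 0.
  move: k1; rewrite hb2 mul0rn mul0r addr0 => /eqP; rewrite mulrn_eq0 => /orP [/eqP|/eqP] //; lia.
split => //; split => //.
by have := H s1; rewrite hb1 hb2 !mul0r !addr0 => ->; rewrite ?inE ?eqxx.
Qed.

Lemma R3gen (b0 b1 b2 s1 s2 s3 : R) (e0 e1 e2 : nat) :
  (e0 < e1)%N -> (e1 < e2)%N -> 0 < s1 -> s1 < s2 -> s2 < s3 ->
  (forall s, s \in [:: s1; s2; s3] -> b0 * s ^+ e0 + b1 * s ^+ e1 + b2 * s ^+ e2 = 0) ->
  b2 = 0.
Proof.
move=> h01 h12 hs1 hs12 hs23 H.
apply: (proj1 (@R3core b0 b1 b2 s1 s2 s3 (e1 - e0) (e2 - e0) _ _ hs1 hs12 hs23 _)); [lia|lia|].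
move=> s hs; have sp : 0 < s.
  move: hs; rewrite !inE => /orP [/eqP->|/orP [/eqP->|/eqP->]] //.
    exact: lt_trans hs12.
  exact: lt_trans (lt_trans hs1 hs12) hs23.
have sn : s ^+ e0 != 0 by rewrite expf_neq0 // gt_eqF.
have := H s hs.
have -> : (e1 = e0 + (e1 - e0))%N by lia.
have -> : (e2 = e0 + (e2 - e0))%N by lia.
rewrite !addKn !exprD => E.
have : (b0 + b1 * s ^+ (e1 - e0) + b2 * s ^+ (e2 - e0)) * s ^+ e0 = 0 by rewrite -E; ring.
by move/eqP; rewrite mulf_eq0 (negbTE sn) orbF => /eqP.
Qed.

Lemma ReM (c : R[i]) (r : R) : complex.Re (c * (real_complex R r)) = complex.Re c * r.
Proof. by case: c => x y /=; rewrite mulr0 subr0. Qed.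
Lemma ImM (c : R[i]) (r : R) : complex.Im (c * (real_complex R r)) = complex.Im c * r.
Proof. by case: c => x y /=; rewrite mulr0 add0r. Qed.

Lemma C3 (c0 c1 c2 : R[i]) (e0 e1 e2 : nat) (s1 s2 s3 : R) :
  (e0 < e1)%N -> (e1 < e2)%N -> 0 < s1 -> s1 < s2 -> s2 < s3 ->
  (forall s, s \in [:: s1; s2; s3] ->
     c0 * (real_complex R (- s)) ^+ e0 + c1 * (real_complex R (- s)) ^+ e1 + c2 * (real_complex R (- s)) ^+ e2 = 0) ->
  c2 = 0.
Proof.
move=> h01 h12 hs1 hs12 hs23 H.
have hR : complex.Re c2 * (-1) ^+ e2 = 0.
  apply: (@R3gen (complex.Re c0 * (-1) ^+ e0) (complex.Re c1 * (-1) ^+ e1) _ s1 s2 s3 e0 e1 e2) => // s hs.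
  have := congr1 (@complex.Re R) (H s hs); rewrite -!rmorphXn !raddfD /= !ReM => E.
  have eN k : (- s) ^+ k = (-1) ^+ k * s ^+ k by exact: exprNn.
  by move: E; rewrite !eN !mulrA.
have hI : complex.Im c2 * (-1) ^+ e2 = 0.
  apply: (@R3gen (complex.Im c0 * (-1) ^+ e0) (complex.Im c1 * (-1) ^+ e1) _ s1 s2 s3 e0 e1 e2) => // s hs.
  have := congr1 (@complex.Im R) (H s hs); rewrite -!rmorphXn !raddfD /= !ImM => E.
  have eN k : (- s) ^+ k = (-1) ^+ k * s ^+ k by exact: exprNn.
  by move: E; rewrite !eN !mulrA.
move: hR hI; have sn : (-1 : R) ^+ e2 != 0 by rewrite expf_neq0 // oppr_eq0 oner_eq0.
move=> /eqP; rewrite mulf_eq0 (negbTE sn) orbF => /eqP hR.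
move=> /eqP; rewrite mulf_eq0 (negbTE sn) orbF => /eqP hI.
by clear H; case: c2 hR hI => x y /= -> ->.
Qed.
End R3.


Section Spec.
Context {R : rcfType}.
Local Notation C := R[i].

Lemma dot_delta m n (i0 : 'I_m) (j0 : 'I_n) (P : 'M[C]_(m,n)) : dot (delta_mx i0 j0) P = P i0 j0.
Proof.
rewrite /dot (bigD1 i0) //= (bigD1 j0) //= mxE !eqxx mul1r.
rewrite big1 ?addr0; last by move=> j /negbTE nj; rewrite mxE nj andbF mul0r.
by rewrite big1 ?addr0 // => i /negbTE ni; rewrite big1 // => j _; rewrite mxE ni mul0r.
Qed.

Lemma ebasis_delta m n p q (hp : (p < m)%N) (hq : (q < n)%N) :
  ebasis R m n p q = delta_mx (Ordinal hp) (Ordinal hq) :> 'M[C]_(m,n).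
Proof. by apply/matrixP => i j; rewrite !mxE. Qed.

Lemma dot_ebasis m n p q (phi : nat -> nat -> C) : (p < m)%N -> (q < n)%N ->
  dot (ebasis R m n p q) (\matrix_(i < m, j < n) phi i j) = phi p q.
Proof. by move=> hp hq; rewrite (@ebasis_delta m n p q hp hq) dot_delta mxE. Qed.

Definition wmx m n d (w : nat -> C) : 'M[C]_(m,n) :=
  \matrix_(i < m, j < n) (((i + j == d)%N)%:R * w (i : nat)).

Lemma dot_ebw m n p q d w : (p < m)%N -> (q < n)%N ->
  dot (ebasis R m n p q) (wmx m n d w) = ((p + q == d)%N)%:R * w p.
Proof. by move=> hp hq; rewrite (@ebasis_delta m n p q hp hq) dot_delta mxE. Qed.

Lemma dot_Sgen m n (a : R) d w i j : (1 <= i)%N -> (i + 1 < m)%N -> (1 <= j)%N -> (j + 1 < n)%N ->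
  dot (Sgen m n a i j) (wmx m n d w) =
  ((i + j == d)%N)%:R * (w (i - 1)%N + a%:C%C * w i + w (i + 1)%N).
Proof.
move=> h1 h2 h3 h4; rewrite /Sgen /wmx !dotD dotZ !dot_ebw; try lia.
have -> : (i - 1 + (j + 1) = i + j)%N by lia.
have -> : (i + 1 + (j - 1) = i + j)%N by lia.
ring.
Qed.

Lemma dot_Tgen m n (a : R) d w i j : (2 <= i)%N -> (i + 1 < m)%N -> (2 <= j)%N -> (j + 1 < n)%N ->
  dot (Tgen m n a i j) (wmx m n d w) =
  ((i + j - 1 == d)%N)%:R * (w (i - 2)%N + (a + 1)%:C%C * w (i - 1)%N + (a + 1)%:C%C * w i + w (i + 1)%N).
Proof.
move=> h1 h2 h3 h4; rewrite /Tgen /wmx !dotD !dotZ !dot_ebw; try lia.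
have -> : (i - 2 + (j + 1) = i + j - 1)%N by lia.
have -> : (i - 1 + j = i + j - 1)%N by lia.
have -> : (i + (j - 1) = i + j - 1)%N by lia.
have -> : (i + 1 + (j - 2) = i + j - 1)%N by lia.
ring.
Qed.

Lemma C1 (c0 x : C) e0 : x != 0 -> c0 * x ^+ e0 = 0 -> c0 = 0.
Proof. by move=> xn /eqP; rewrite mulf_eq0 expf_eq0 (negbTE xn) andbF orbF => /eqP. Qed.

Lemma C2 (c0 c1 x y : C) e0 e1 : (e0 < e1)%N -> x != 0 -> y != 0 ->
  x ^+ (e1 - e0) != y ^+ (e1 - e0) ->
  c0 * x ^+ e0 + c1 * x ^+ e1 = 0 -> c0 * y ^+ e0 + c1 * y ^+ e1 = 0 -> c1 = 0.
Proof.
move=> h xn yn ne; set p := (e1 - e0)%N in ne *.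
have -> : e1 = (e0 + p)%N by rewrite /p; lia.
rewrite !exprD => Ex Ey.
have Ex' : c0 + c1 * x ^+ p = 0.
  apply: (@C1 _ x e0) => //; by rewrite -Ex; ring.
have Ey' : c0 + c1 * y ^+ p = 0.
  apply: (@C1 _ y e0) => //; by rewrite -Ey; ring.
have : c1 * (x ^+ p - y ^+ p) = 0.
  by transitivity ((c0 + c1 * x ^+ p) - (c0 + c1 * y ^+ p)); [ring | rewrite Ex' Ey' subrr].
by move/eqP; rewrite mulf_eq0 subr_eq0 (negbTE ne) orbF => /eqP.
Qed.

Lemma C2d (c0 c1 x : C) e0 e1 : (e0 < e1)%N -> x != 0 ->
  c0 * x ^+ e0 + c1 * x ^+ e1 = 0 ->
  c0 * (e0%:R * x ^+ e0) + c1 * (e1%:R * x ^+ e1) = 0 -> c1 = 0.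
Proof.
move=> h xn E1 E2.
have : c1 * x ^+ e1 * (e1%:R - e0%:R) = 0.
  by transitivity ((c0 * (e0%:R * x ^+ e0) + c1 * (e1%:R * x ^+ e1)) - e0%:R * (c0 * x ^+ e0 + c1 * x ^+ e1));
    [ring | rewrite E1 E2 mulr0 subrr].
move/eqP; rewrite -natrB ?(ltnW h) // !mulf_eq0 expf_eq0 (negbTE xn) andbF orbF.
by rewrite pnatr_eq0 subn_eq0 leqNgt h orbF => /eqP.
Qed.

Lemma S_kill m n (a : R) (w : nat -> C) (v : 'M[C]_(m,n)) :
  (forall i, (1 <= i)%N -> w (i - 1)%N + a%:C%C * w i + w (i + 1)%N = 0) ->
  (mxvec v <= Sspace m n a)%MS -> forall d, dot v (wmx m n d w) = 0.
Proof.
move=> Hw sv d; apply: (@dot_kill _ m n (Sgen m n a) 1 (m - 1) 1 (n - 1) _ v _ sv).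
move=> i j /andP [h1 h2] /andP [h3 h4].
by rewrite dot_Sgen ?Hw ?mulr0 //; lia.
Qed.

Lemma T_kill m n (a : R) (w : nat -> C) (v : 'M[C]_(m,n)) :
  (forall i, (2 <= i)%N -> w (i - 2)%N + (a + 1)%:C%C * w (i - 1)%N + (a + 1)%:C%C * w i + w (i + 1)%N = 0) ->
  (mxvec v <= Tspace m n a)%MS -> forall d, dot v (wmx m n d w) = 0.
Proof.
move=> Hw sv d; apply: (@dot_kill _ m n (Tgen m n a) 2 (m - 1) 2 (n - 1) _ v _ sv).
move=> i j /andP [h1 h2] /andP [h3 h4].
by rewrite dot_Tgen ?Hw ?mulr0 //; lia.
Qed.

Lemma rC (a r : R) : r ^+ 2 + a * r + 1 = 0 ->
  1 + a%:C%C * r%:C%C + (r%:C%C) ^+ 2 = 0 :> C.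
Proof.
move=> E; transitivity (real_complex R (r ^+ 2 + a * r + 1)); last by rewrite E.
by rewrite !rmorphD rmorphXn rmorphM rmorph1; ring.
Qed.

Lemma wS_root (a r : R) : r ^+ 2 + a * r + 1 = 0 ->
  forall i, (1 <= i)%N -> (r%:C%C) ^+ (i - 1)%N + a%:C%C * (r%:C%C) ^+ i + (r%:C%C) ^+ (i + 1)%N = 0 :> C.
Proof.
move=> E [//|i] _; rewrite subSS subn0 addn1.
have E' := @rC a r E.
transitivity ((r%:C%C) ^+ i * (1 + a%:C%C * r%:C%C + (r%:C%C) ^+ 2)); first by rewrite !exprS; ring.
by rewrite E' mulr0.
Qed.

Lemma wS_der (a r : R) : r ^+ 2 + a * r + 1 = 0 -> r ^+ 2 = 1 ->
  forall i, (1 <= i)%N -> (i - 1)%N%:R * (r%:C%C) ^+ (i - 1)%N + a%:C%C * (i%:R * (r%:C%C) ^+ i)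
     + (i + 1)%N%:R * (r%:C%C) ^+ (i + 1)%N = 0 :> C.
Proof.
move=> E E2 [//|i] _; rewrite subSS subn0 addn1.
have E' := @rC a r E.
have E2' : (r%:C%C) ^+ 2 = 1 :> C.
  by transitivity (real_complex R (r ^+ 2)); [rewrite rmorphXn | rewrite E2 rmorph1].
transitivity ((r%:C%C) ^+ i * (i.+1%:R * (1 + a%:C%C * r%:C%C + (r%:C%C) ^+ 2) + ((r%:C%C) ^+ 2 - 1))).
  by rewrite !mulrSr !exprS; ring.
by rewrite E' E2' subrr mulr0 addr0 mulr0.
Qed.

Lemma wT_root (a r : R) : (r ^+ 2 + a * r + 1) * (1 + r) = 0 ->
  forall i, (2 <= i)%N -> (r%:C%C) ^+ (i - 2)%N + (a + 1)%:C%C * (r%:C%C) ^+ (i - 1)%N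
     + (a + 1)%:C%C * (r%:C%C) ^+ i + (r%:C%C) ^+ (i + 1)%N = 0 :> C.
Proof.
move=> E [//|[//|i]] _; rewrite !subSS !subn0 addn1.
have E' : ((r ^+ 2 + a * r + 1) * (1 + r))%:C%C = 0 :> C by rewrite E.
transitivity ((r%:C%C) ^+ i * ((r ^+ 2 + a * r + 1) * (1 + r))%:C%C).
  by rewrite !rmorphM !rmorphD rmorphXn rmorphM rmorph1 !exprS; ring.
by rewrite E' mulr0.
Qed.

Lemma Tgen_split m n (a : R) i j : (2 <= i)%N -> (1 <= j)%N ->
  Tgen m n a i j = Sgen m n a (i - 1) j + Sgen m n a i (j - 1).
Proof.
move=> hi hj; rewrite /Tgen /Sgen.
have -> : (i - 1 - 1 = i - 2)%N by lia.
have -> : (i - 1 + 1 = i)%N by lia.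
have -> : (j - 1 + 1 = j)%N by lia.
have -> : (j - 1 - 1 = j - 2)%N by lia.
rewrite rmorphD rmorph1; apply/matrixP => x y; rewrite !mxE; ring.
Qed.

Lemma TsubS m n (a : R) : (Tspace m n a <= Sspace m n a)%MS.
Proof.
apply: dsum_sub => i j /andP [h1 h2] /andP [h3 h4].
rewrite Tgen_split; try lia.
rewrite linearD /=; apply: addmx_sub; apply: dsum_sup; lia.
Qed.

Lemma full_rank m n (X : 'M[C]_(m * n)) :
  (forall p q, (p < m)%N -> (q < n)%N -> (mxvec (ebasis R m n p q) <= X)%MS) ->
  \rank X = (m * n)%N.
Proof.
move=> H; apply/eqP; rewrite -[_ == _]/(row_full X) -sub1mx; apply/row_subP => k.
rewrite row1; case: (mxvec_indexP k) => i j; rewrite -mxvec_delta.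
have <- : ebasis R m n i j = delta_mx i j by apply/matrixP => x y; rewrite !mxE.
exact: H.
Qed.

Lemma negmx_sub p k (A : 'M[C]_(p, k)) (B : 'M[C]_k) : (A <= B)%MS -> (- A <= B)%MS.
Proof. by move=> s; rewrite -scaleN1r scalemx_sub. Qed.

Definition WS m n : 'M[C]_(m * n) :=
  (dsum (ebasis R m n) 0 2 0 n + dsum (ebasis R m n) 2 m (n - 2) n)%MS.
Definition WT m n : 'M[C]_(m * n) :=
  (dsum (ebasis R m n) 0 3 0 n + dsum (ebasis R m n) 3 m (n - 3) n)%MS.

Lemma S_span m n (a : R) : (4 <= m)%N -> (4 <= n)%N -> forall p q, (p < m)%N -> (q < n)%N ->
  (mxvec (ebasis R m n p q) <= Sspace m n a + WS m n)%MS.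
Proof.
move=> hm hn p; elim/ltn_ind: p => p IH q hp hq.
case: (ltnP p 2) => [p2|p2].
  apply: submx_trans (addsmxSr _ _); apply: submx_trans (addsmxSl _ _); apply: dsum_sup; lia.
case: (ltnP q (n - 2)) => [qn|qn]; last first.
  apply: submx_trans (addsmxSr _ _); apply: submx_trans (addsmxSr _ _); apply: dsum_sup; lia.
have e : ebasis R m n p q = Sgen m n a (p - 1) (q + 1) - ebasis R m n (p - 2) (q + 2)
    - a%:C%C *: ebasis R m n (p - 1) (q + 1).
  rewrite /Sgen; have -> : (p - 1 - 1 = p - 2)%N by lia.
  have -> : (q + 1 + 1 = q + 2)%N by lia.
  have -> : (p - 1 + 1 = p)%N by lia.
  have -> : (q + 1 - 1 = q)%N by lia.
  by apply/matrixP => x y; rewrite !mxE; ring.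
rewrite e !linearB linearZ /=; apply: addmx_sub; first apply: addmx_sub.
- apply: submx_trans (addsmxSl _ _); apply: dsum_sup; lia.
- apply: negmx_sub; apply: IH; lia.
- apply: negmx_sub; apply: scalemx_sub; apply: IH; lia.
Qed.

Lemma T_span m n (a : R) : (4 <= m)%N -> (4 <= n)%N -> forall p q, (p < m)%N -> (q < n)%N ->
  (mxvec (ebasis R m n p q) <= Tspace m n a + WT m n)%MS.
Proof.
move=> hm hn p; elim/ltn_ind: p => p IH q hp hq.
case: (ltnP p 3) => [p2|p2].
  apply: submx_trans (addsmxSr _ _); apply: submx_trans (addsmxSl _ _); apply: dsum_sup; lia.
case: (ltnP q (n - 3)) => [qn|qn]; last first.
  apply: submx_trans (addsmxSr _ _); apply: submx_trans (addsmxSr _ _); apply: dsum_sup; lia.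
have e : ebasis R m n p q = Tgen m n a (p - 1) (q + 2) - ebasis R m n (p - 3) (q + 3)
    - (a + 1)%:C%C *: ebasis R m n (p - 2) (q + 2) - (a + 1)%:C%C *: ebasis R m n (p - 1) (q + 1).
  rewrite /Tgen; have -> : (p - 1 - 2 = p - 3)%N by lia.
  have -> : (q + 2 + 1 = q + 3)%N by lia.
  have -> : (p - 1 - 1 = p - 2)%N by lia.
  have -> : (q + 2 - 1 = q + 1)%N by lia.
  have -> : (p - 1 + 1 = p)%N by lia.
  have -> : (q + 2 - 2 = q)%N by lia.
  by apply/matrixP => x y; rewrite !mxE; ring.
rewrite e !linearB !linearZ /=; apply: addmx_sub; first apply: addmx_sub; first apply: addmx_sub.
- apply: submx_trans (addsmxSl _ _); apply: dsum_sup; lia.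
- apply: negmx_sub; apply: IH; lia.
- apply: scalemx_sub; apply: negmx_sub; apply: IH; lia.
- apply: scalemx_sub; apply: negmx_sub; apply: IH; lia.
Qed.

Lemma dimS m n (a : R) : (4 <= m)%N -> (4 <= n)%N -> \rank (Sspace m n a) = ((m - 2) * (n - 2))%N.
Proof.
move=> hm hn.
have up : (\rank (Sspace m n a) <= (m - 1 - 1) * (n - 1 - 1))%N by apply: dsum_rank.
have full := @full_rank m n _ (@S_span m n a hm hn).
have h1 := mxrank_adds_leqif (Sspace m n a) (WS m n).
have h2 := mxrank_adds_leqif (dsum (ebasis R m n) 0 2 0 n) (dsum (ebasis R m n) 2 m (n - 2) n).
have h3 := @dsum_rank _ m n (ebasis R m n) 0 2 0 n.
have h4 := @dsum_rank _ m n (ebasis R m n) 2 m (n - 2) n.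
move: h1 h2 => [h1 _] [h2 _]; rewrite full in h1; rewrite /WS in h1.
have e : (m * n = (m - 2) * (n - 2) + 2 * n + (m - 2) * 2)%N.
  case: m hm {up full h1 h2 h3 h4} => [|[|m]] // _; case: n hn => [|[|n]] // _.
  rewrite !subSS !subn0; nia.
have e3 : (m - 1 - 1 = m - 2)%N by lia.
have e4 : (n - 1 - 1 = n - 2)%N by lia.
have e5 : (n - (n - 2) = 2)%N by lia.
rewrite e3 e4 in up; rewrite e5 in h4; rewrite !subn0 in h3.
move: h1; rewrite {1}e => h1.
move: up h1 h2 h3 h4; set X := ((m - 2) * (n - 2))%N; set Y := ((m - 2) * 2)%N; lia.
Qed.

Lemma dimT m n (a : R) : (4 <= m)%N -> (4 <= n)%N -> \rank (Tspace m n a) = ((m - 3) * (n - 3))%N.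
Proof.
move=> hm hn.
have up : (\rank (Tspace m n a) <= (m - 1 - 2) * (n - 1 - 2))%N by apply: dsum_rank.
have full := @full_rank m n _ (@T_span m n a hm hn).
have h1 := mxrank_adds_leqif (Tspace m n a) (WT m n).
have h2 := mxrank_adds_leqif (dsum (ebasis R m n) 0 3 0 n) (dsum (ebasis R m n) 3 m (n - 3) n).
have h3 := @dsum_rank _ m n (ebasis R m n) 0 3 0 n.
have h4 := @dsum_rank _ m n (ebasis R m n) 3 m (n - 3) n.
move: h1 h2 => [h1 _] [h2 _]; rewrite full in h1; rewrite /WT in h1.
have e : (m * n = (m - 3) * (n - 3) + 3 * n + (m - 3) * 3)%N.
  case: m hm {up full h1 h2 h3 h4} => [|[|[|m]]] // _; case: n hn => [|[|[|n]]] // _.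
  rewrite !subSS !subn0; nia.
have e3 : (m - 1 - 2 = m - 3)%N by lia.
have e4 : (n - 1 - 2 = n - 3)%N by lia.
have e5 : (n - (n - 3) = 3)%N by lia.
rewrite e3 e4 in up; rewrite e5 in h4; rewrite !subn0 in h3.
move: h1; rewrite {1}e => h1.
move: up h1 h2 h3 h4; set X := ((m - 3) * (n - 3))%N; set Y := ((m - 3) * 3)%N; lia.
Qed.

End Spec.


Arguments C1 {R c0 x e0}.
Arguments C3 {R c0 c1 c2 e0 e1 e2 s1 s2 s3}.
Arguments C2 {R c0 c1 x y e0 e1}.
Arguments C2d {R c0 c1 x e0 e1}.
Section D. Context {R : rcfType}. Local Notation C := R[i].
Lemma powneq (r1 r2 : R) p : (0 < p)%N -> r1 != r2 -> r1 * r2 = 1 -> r1 ^+ p != r2 ^+ p.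
Proof.
move=> pp ne prod; apply/negP => /eqP E.
have : `|r1| ^+ p == `|r2| ^+ p by rewrite -!normrX E.
rewrite eqrXn2 // => /eqP N.
have sq : r1 ^+ 2 = r2 ^+ 2 by rewrite -(real_normK (num_real r1)) -(real_normK (num_real r2)) N.
have : (r1 - r2) * (r1 + r2) = 0 by rewrite -subr_sqr sq subrr.
move/eqP; rewrite mulf_eq0 subr_eq0 (negbTE ne) /= addr_eq0 => /eqP e2.
move: prod; rewrite e2 mulNr => h.
have : 0 <= r2 * r2 by rewrite -expr2 sqr_ge0.
by rewrite -oppr_le0 h ler10.
Qed.

Lemma powneqC {r1 r2 : R} {p} : (0 < p)%N -> r1 != r2 -> r1 * r2 = 1 ->
  (r1%:C%C) ^+ p != (r2%:C%C) ^+ p :> C.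
Proof.
move=> pp ne prod; rewrite -!rmorphXn /=.
apply/negP => /eqP /complexI /eqP; exact/negP/powneq.
Qed.

Lemma rCnz {r : R} : r != 0 -> r%:C%C != 0 :> C.
Proof. by move=> rn; apply/negP => /eqP; rewrite -(rmorph0 (real_complex R)) => /complexI /eqP; apply/negP. Qed.

Definition WpS (rs : seq R) (w : nat -> C) := exists2 r, r \in rs & w = (fun i => (r%:C%C) ^+ i).

Lemma sum2 (F : 'I_2 -> C) : \sum_(x < 2) F x = F ord0 + F (lift ord0 ord0).
Proof. by rewrite big_ord_recl big_ord1. Qed.
Lemma sum3 (F : 'I_3 -> C) : \sum_(x < 3) F x = F ord0 + F (lift ord0 ord0) + F (lift ord0 (lift ord0 ord0)).
Proof. by rewrite big_ord_recl big_ord_recl big_ord1 addrA. Qed.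

Lemma sparseS2 (r1 r2 : R) : r1 != r2 -> r1 * r2 = 1 ->
  forall k (e : 'I_k -> nat) (c : 'I_k -> C), (0 < k)%N ->
     (forall x y : 'I_k, (x < y)%N -> (e x < e y)%N) -> (forall x, c x != 0) ->
     (forall w, WpS [:: r1; r2] w -> \sum_(x < k) c x * w (e x) = 0) -> (3 <= k)%N.
Proof.
move=> ne prod k e c kp mono cnz H.
have r1n : r1 != 0 by apply/negP => /eqP z; move: prod; rewrite z mul0r => /eqP; rewrite eq_sym oner_eq0.
have r2n : r2 != 0 by apply/negP => /eqP z; move: prod; rewrite z mulr0 => /eqP; rewrite eq_sym oner_eq0.
have H1 := H _ (ex_intro2 _ _ r1 (mem_head _ _) erefl).
have r2in : r2 \in [:: r1; r2] by rewrite !inE eqxx orbT.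
have H2 := H _ (ex_intro2 _ _ r2 r2in erefl).
case: k e c kp mono cnz H H1 H2 => [|[|[|k]]] e c // _ mono cnz _ H1 H2.
- move: H1; rewrite big_ord1 => /(C1 (rCnz r1n)) /eqP; by rewrite (negbTE (cnz ord0)).
- move: H1 H2; rewrite !sum2 => H1 H2.
  have m01 : (e ord0 < e (lift ord0 ord0))%N by apply: mono.
  have p0 : (0 < e (lift ord0 ord0) - e ord0)%N by rewrite subn_gt0.
  have := C2 m01 (rCnz r1n) (rCnz r2n) (powneqC p0 ne prod) H1 H2.
  by move/eqP; rewrite (negbTE (cnz _)).
Qed.

Lemma sparseSd (r : R) : r != 0 ->
  forall k (e : 'I_k -> nat) (c : 'I_k -> C), (0 < k)%N ->
     (forall x y : 'I_k, (x < y)%N -> (e x < e y)%N) -> (forall x, c x != 0) ->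
     (forall w, (w = (fun i => (r%:C%C) ^+ i) \/ w = (fun i => i%:R * (r%:C%C) ^+ i)) ->
        \sum_(x < k) c x * w (e x) = 0) -> (3 <= k)%N.
Proof.
move=> rn k e c kp mono cnz H.
have H1 := H _ (or_introl erefl).
have H2 := H _ (or_intror erefl).
case: k e c kp mono cnz H H1 H2 => [|[|[|k]]] e c // _ mono cnz _ H1 H2.
- move: H1; rewrite big_ord1 => /(C1 (rCnz rn)) /eqP; by rewrite (negbTE (cnz ord0)).
- move: H1 H2; rewrite !sum2 => H1 H2.
  have m01 : (e ord0 < e (lift ord0 ord0))%N by apply: mono.
  have := C2d m01 (rCnz rn) H1 H2.
  by move/eqP; rewrite (negbTE (cnz _)).
Qed.

Lemma sparseT (r1 r2 : R) : r2 < -1 -> -1 < r1 -> r1 < 0 -> r1 * r2 = 1 ->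
  forall k (e : 'I_k -> nat) (c : 'I_k -> C), (0 < k)%N ->
     (forall x y : 'I_k, (x < y)%N -> (e x < e y)%N) -> (forall x, c x != 0) ->
     (forall w, WpS [:: -1; r1; r2] w -> \sum_(x < k) c x * w (e x) = 0) -> (4 <= k)%N.
Proof.
move=> h2 h1 h0 prod k e c kp mono cnz H.
have ne : r1 != r2 by apply/negP => /eqP e12; move: h1 h2; rewrite e12; lra.
have r1n : r1 != 0 by rewrite lt_eqF.
have r2n : r2 != 0 by apply/negP => /eqP z; move: h2; rewrite z; lra.
have Hr r : r \in [:: -1; r1; r2] -> \sum_(x < k) c x * (r%:C%C) ^+ (e x) = 0.
  by move=> rin; apply: (H _ (ex_intro2 _ _ r rin erefl)).
have r1in : r1 \in [:: -1; r1; r2] by rewrite !inE eqxx orbT.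
have r2in : r2 \in [:: -1; r1; r2] by rewrite !inE eqxx !orbT.
have H1 := Hr r1 r1in.
have H2 := Hr r2 r2in.
case: k e c kp mono cnz H Hr H1 H2 => [|[|[|[|k]]]] e c // _ mono cnz _ Hr H1 H2.
- move: H1; rewrite big_ord1 => /(C1 (rCnz r1n)) /eqP; by rewrite (negbTE (cnz ord0)).
- move: H1 H2; rewrite !sum2 => H1 H2.
  have m01 : (e ord0 < e (lift ord0 ord0))%N by apply: mono.
  have p0 : (0 < e (lift ord0 ord0) - e ord0)%N by rewrite subn_gt0.
  have := C2 m01 (rCnz r1n) (rCnz r2n) (powneqC p0 ne prod) H1 H2.
  by move/eqP; rewrite (negbTE (cnz _)).
- have m01 : (e ord0 < e (lift ord0 ord0))%N by apply: mono.
  have m12 : (e (lift ord0 ord0) < e (lift ord0 (lift ord0 ord0)))%N by apply: mono.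
  have s1p : 0 < - r1 by rewrite oppr_gt0.
  have s12 : - r1 < 1 by rewrite ltrNl.
  have s23 : 1 < - r2 by rewrite ltrNr.
  have HH : forall s, s \in [:: - r1; 1; - r2] ->
    c ord0 * (real_complex R (- s)) ^+ e ord0 + c (lift ord0 ord0) * (real_complex R (- s)) ^+ e (lift ord0 ord0)
    + c (lift ord0 (lift ord0 ord0)) * (real_complex R (- s)) ^+ e (lift ord0 (lift ord0 ord0)) = 0.
    have Hr3 r : r \in [:: -1; r1; r2] -> c ord0 * (real_complex R r) ^+ e ord0
       + c (lift ord0 ord0) * (real_complex R r) ^+ e (lift ord0 ord0)
       + c (lift ord0 (lift ord0 ord0)) * (real_complex R r) ^+ e (lift ord0 (lift ord0 ord0)) = 0.
      by move=> rin; have := Hr r rin; rewrite sum3.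
    move=> s; rewrite !inE => /orP [/eqP->|/orP [/eqP->|/eqP->]]; rewrite ?opprK; apply: Hr3;
      by rewrite !inE eqxx ?orbT.
  have := C3 m01 m12 s1p s12 s23 HH.
  by move=> /eqP; rewrite (negbTE (cnz _)).
Qed.
End D.


Section E.
Context {R : rcfType}.
Local Notation C := R[i].

Lemma roots {a : R} : 2 < `|a| ->
  exists r1 r2 : R, [/\ r1 != r2, r1 * r2 = 1, r1 ^+ 2 + a * r1 + 1 = 0,
     r2 ^+ 2 + a * r2 + 1 = 0 & (4 < a -> [/\ r2 < -1, -1 < r1 & r1 < 0])].
Proof.
move=> ha.
have a2 : 4 < a ^+ 2 by move: ha; rewrite ltr_normr => /orP [h|h]; nra.
pose s := Num.sqrt (a ^+ 2 - 4).
have s2 : s ^+ 2 = a ^+ 2 - 4 by rewrite sqr_sqrtr // subr_ge0 ltW.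
have sp : 0 < s by rewrite sqrtr_gt0 subr_gt0.
exists ((- a + s) / 2), ((- a - s) / 2); split.
- apply/negP => /eqP e; have : s = - s by move: e; lra.
  lra.
- nra.
- nra.
- nra.
- move=> a4; split; nra.
Qed.

Lemma S_rank m n (a : R) (v : 'M[C]_(m, n)) : 2 <= `|a| ->
  (mxvec v <= Sspace m n a)%MS -> v != 0 -> (2 < \rank v)%N.
Proof.
move=> ha vS vnz.
have [gt|eq] : 2 < `|a| \/ `|a| = 2.
  by move: ha; rewrite le_eqVlt => /orP [/eqP <-|->]; [right|left].
- have [r1 [r2 [ne prod e1 e2 _]]] := roots gt.
  apply: (@low_rank _ (WpS [:: r1; r2]) 3 m n v vnz _ (@sparseS2 _ r1 r2 ne prod)).
  move=> d w [r rin ->]; apply: (@S_kill _ m n a (fun i => (r%:C%C) ^+ i) v _ vS d).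
  apply: wS_root; move: rin; rewrite !inE => /orP [/eqP->|/eqP->] //.
- pose r := - a / 2.
  have a2 : a ^+ 2 = 4.
    by rewrite -(real_normK (num_real a)) eq; rewrite expr2; lra.
  have r2 : r ^+ 2 = 1 by rewrite /r; nra.
  have er : r ^+ 2 + a * r + 1 = 0 by rewrite /r; nra.
  have rn : r != 0 by apply/eqP => z; move: r2; rewrite z expr2 mul0r => /esym/eqP; rewrite oner_eq0.
  apply: (@low_rank _ (fun w => w = (fun i => (r%:C%C) ^+ i) \/ w = (fun i => i%:R * (r%:C%C) ^+ i))
     3 m n v vnz _ (@sparseSd _ r rn)).
  move=> d w [->|->].
  + by apply: (@S_kill _ m n a (fun i => (r%:C%C) ^+ i) v _ vS d) => i hi /=; exact: wS_root.
  + by apply: (@S_kill _ m n a (fun i => i%:R * (r%:C%C) ^+ i) v _ vS d) => i hi /=; exact: wS_der.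
Qed.

Lemma T_rank m n (a : R) (v : 'M[C]_(m, n)) : 4 < a ->
  (mxvec v <= Tspace m n a)%MS -> v != 0 -> (3 < \rank v)%N.
Proof.
move=> ha vT vnz.
have gt : 2 < `|a| by rewrite ger0_norm; lra.
have [r1 [r2 [ne prod e1 e2 /(_ ha) [h2 h1 h0]]]] := roots gt.
apply: (@low_rank _ (WpS [:: -1; r1; r2]) 4 m n v vnz _ (@sparseT _ r1 r2 h2 h1 h0 prod)).
move=> d w [r rin ->]; apply: (@T_kill _ m n a (fun i => (r%:C%C) ^+ i) v _ vT d).
apply: wT_root; move: rin; rewrite !inE => /orP [/eqP->|/orP [/eqP->|/eqP->]].
- by rewrite addrN mulr0.
- by rewrite e1 mul0r.
- by rewrite e2 mul0r.
Qed.
End E.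

Theorem theorem5p8 (R : realType) (m n : nat) (a : R) :
  (4 <= minn m n)%N ->
  [/\ (Tspace m n a <= Sspace m n a)%MS,
      (2 <= `|a| ->
         (forall v : 'M[R[i]]_(m, n), in_space v (Sspace m n a) -> v != 0 ->
            (2 < schmidt_rank v)%N)
         /\ dimsp (Sspace m n a) = ((m - 2) * (n - 2))%N),
      (4 < a ->
         (forall v : 'M[R[i]]_(m, n), in_space v (Tspace m n a) -> v != 0 ->
            (3 < schmidt_rank v)%N)
         /\ dimsp (Tspace m n a) = ((m - 3) * (n - 3))%N)
    & (4 < a ->
         exists v : 'M[R[i]]_(m, n),
           [/\ in_space v (Sspace m n a), ~~ in_space v (Tspace m n a)
             & schmidt_rank v = 3%N])].
Proof.
move=> hmn; have hm : (4 <= m)%N by lia.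
have hn : (4 <= n)%N by lia.
split.
- exact: TsubS.
- move=> ha; split; last exact: dimS.
  by move=> v vS vnz; apply: (@S_rank _ m n a v ha vS vnz).
- move=> ha; split; last exact: dimT.
  by move=> v vT vnz; apply: (@T_rank _ m n a v ha vT vnz).
- move=> ha; exists (Sgen m n a 1 1).
  have vS : in_space (Sgen m n a 1 1) (Sspace m n a) by apply: dsum_sup; lia.
  have an : a != 0 by rewrite gt_eqF //; lra.
  have dS : dot (Sgen m n a 1 1) (wmx m n 2 (fun i => ((i == 1)%N)%:R)) = a%:C%C.
    rewrite dot_Sgen //= ?mulr1n ?mulr0n ?mul1r ?mulr1 ?add0r ?addr0 //; lia.
  have vnz : Sgen m n a 1 1 != 0.
    apply/negP => /eqP z; move: dS; rewrite z /dot big1 => [/esym/eqP|i _]; last by rewrite big1 // => j _; rewrite mxE mul0r.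
    by rewrite -(rmorph0 (real_complex R)) => /eqP /complexI /eqP; apply/negP.
  split => //.
  + apply/negP => vT.
    have := @dot_kill _ m n (Tgen m n a) 2 (m - 1) 2 (n - 1) (wmx m n 2 (fun i => ((i == 1)%N)%:R)) _ _ vT.
    rewrite dS => H; move/negP: vnz; apply; apply/eqP.
    have : a%:C%C = 0 :> R[i].
      apply: H => i j /andP [h1 h2] /andP [h3 h4]; rewrite dot_Tgen; try lia.
      have -> : (i + j - 1 == 2)%N = false by apply/negbTE/eqP; lia.
      by rewrite mulr0n mul0r.
    by rewrite -(rmorph0 (real_complex R)) => /complexI /eqP; rewrite (negbTE an).
  + have ha2 : 2 <= `|a| by rewrite ger0_norm; lra.
    apply/eqP; rewrite eqn_leq; apply/andP; split; last exact: (@S_rank _ m n a _ ha2 vS vnz).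
    rewrite /schmidt_rank /Sgen.
    apply: leq_trans (mxrank_add _ _) _.
    have r1 p q : (p < m)%N -> (q < n)%N -> (\rank (ebasis R m n p q) <= 1)%N.
      by move=> hp hq; rewrite (@ebasis_delta _ m n p q hp hq) mxrank_delta.
    have -> : (3 = 2 + 1)%N by [].
    apply: leq_add; last by apply: r1; lia.
    apply: leq_trans (mxrank_add _ _) _.
    have -> : (2 = 1 + 1)%N by [].
    apply: leq_add; first by apply: r1; lia.
    apply: leq_trans (mxrankS (scalemx_sub _ (submx_refl _))) _.
    by apply: r1; lia.
Qed.
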